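(* The lattice $L_V(\mathbf{K}_1)$ of subvarieties of $\mathbf{K}_1$ is isomorphic to an $\omega+1$ chain.
   Context: A pseudocomplemented de Morgan algebra is $(L;\wedge,\vee,{}^\ast,{}^\prime,0,1)$ with bounded distributive lattice reduct, pseudocomplement ${}^\ast$ and de Morgan involution ${}^\prime$. $\mathbf{K}_1$ is the variety of such algebras satisfying $x\wedge x^{\prime\ast\prime}\le y\vee y^\ast$ (regularity), $x\wedge x'\le y\vee y'$ (Kleene), and $(x\wedge x^{\prime\ast})^{\prime\ast}=(x\wedge x^{\prime\ast})^{\prime\ast\prime\ast}$ (range $1$). $L_V(\mathbf{K}_1)$ is ordered by inclusion and includes the trivial variety. *)

(* Defs.v *)
Record pcdm := PCDM {
  car :> Type;
  meet : car -> car -> car;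
  join : car -> car -> car;
  star : car -> car;
  dm   : car -> car;
  bot  : car;
  top  : car;
  meetA : forall x y z, meet x (meet y z) = meet (meet x y) z;
  joinA : forall x y z, join x (join y z) = join (join x y) z;
  meetC : forall x y, meet x y = meet y x;
  joinC : forall x y, join x y = join y x;
  meet_absorb : forall x y, meet x (join x y) = x;
  join_absorb : forall x y, join x (meet x y) = x;
  meet_joinDr : forall x y z, meet x (join y z) = join (meet x y) (meet x z);
  meet_bot : forall x, meet bot x = bot;
  meet_top : forall x, meet top x = x;
  star_spec : forall x y, meet x y = bot <-> meet y (star x) = y;
  dmK : forall x, dm (dm x) = x;
  dm_join : forall x y, dm (join x y) = meet (dm x) (dm y);
  dm_bot : dm bot = top
}.

Definition le (A : pcdm) (x y : A) : Prop := meet A x y = x.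

Definition inK1 (A : pcdm) : Prop :=
  (* regularity axiom *)
  (forall x y : A, le A (meet A x (dm A (star A (dm A x)))) (join A y (star A y)))
  (* Kleene: x /\ x' <= y \/ y' *)
  /\ (forall x y : A, le A (meet A x (dm A x)) (join A y (dm A y)))
  (* range 1 axiom *)
  /\ (forall x : A,
        let u := meet A x (star A (dm A x)) in
        star A (dm A u) = star A (dm A (star A (dm A u)))).

Inductive term : Type :=
  | TVar : nat -> term
  | TMeet : term -> term -> term
  | TJoin : term -> term -> term
  | TStar : term -> term
  | TDm : term -> term
  | TZero : term
  | TOne : term.

Fixpoint eval (A : pcdm) (v : nat -> A) (t : term) : A :=
  match t with
  | TVar n => v n
  | TMeet s u => meet A (eval A v s) (eval A v u)
  | TJoin s u => join A (eval A v s) (eval A v u)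
  | TStar s => star A (eval A v s)
  | TDm s => dm A (eval A v s)
  | TZero => bot A
  | TOne => top A
  end.

Definition identity := (term * term)%type.

Definition satisfies (A : pcdm) (e : identity) : Prop :=
  forall v : nat -> A, eval A v (fst e) = eval A v (snd e).

Definition ModK1 (S : identity -> Prop) (A : pcdm) : Prop :=
  inK1 A /\ (forall e, S e -> satisfies A e).

(** A class of algebras is a subvariety of K1 iff it is the class of members of
    K1 satisfying some set of identities (Birkhoff).  Classes are compared
    extensionally. *)
Definition subvariety_K1 (V : pcdm -> Prop) : Prop :=
  exists S : identity -> Prop, forall A, V A <-> ModK1 S A.

(** * The chain omega+1: [Some n] is n, [None] is the top element omega. *)
Definition le_omega1 (i j : option nat) : Prop :=
  match i, j with
  | _, None => True
  | None, Some _ => False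
  | Some m, Some n => m <= n
  end.

(* Main.v *)
From Stdlib Require Import PeanoNat.
From Stdlib Require Import Classical FunctionalExtensionality PropExtensionality ProofIrrelevance ClassicalEpsilon.
From Stdlib Require List.
From mathcomp Require Import classical_sets.
Require Import Defs.

Record Tel (Z : Type) := mkT {
  tU : Z -> Prop; tV : Z -> Prop;
  tC : (forall z, tU z) \/ (forall z, ~ tV z) }.
Arguments mkT {Z}.
Arguments tU {Z}.
Arguments tV {Z}.
Arguments tC {Z}.

Lemma Teq {Z} (a b : Tel Z) :
  (forall z, tU a z <-> tU b z) -> (forall z, tV a z <-> tV b z) -> a = b.
Proof.
  destruct a as [U1 V1 C1], b as [U2 V2 C2]; simpl; intros HU HV.
  assert (U1 = U2) by (extensionality z; apply propositional_extensionality; auto).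
  assert (V1 = V2) by (extensionality z; apply propositional_extensionality; auto).
  subst. f_equal. apply proof_irrelevance.
Qed.

Lemma TeqU {Z} (a b : Tel Z) : a = b -> forall z, tU a z <-> tU b z.
Proof. intros ->; tauto. Qed.
Lemma TeqV {Z} (a b : Tel Z) : a = b -> forall z, tV a z <-> tV b z.
Proof. intros ->; tauto. Qed.

Definition Tmeet {Z} (a b : Tel Z) : Tel Z.
Proof.
  refine (mkT (fun z => tU a z /\ tU b z) (fun z => tV a z /\ tV b z) _).
  destruct (tC a), (tC b); firstorder.
Defined.
Definition Tjoin {Z} (a b : Tel Z) : Tel Z.
Proof.
  refine (mkT (fun z => tU a z \/ tU b z) (fun z => tV a z \/ tV b z) _).
  destruct (tC a), (tC b); firstorder.
Defined.
Definition Tstar {Z} (a : Tel Z) : Tel Z.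
Proof.
  refine (mkT (fun z => ~ tU a z) (fun z => forall w, ~ tU a w) _).
  destruct (classic (forall z, ~ tU a z)); [left|right]; firstorder.
Defined.
Definition Tdm {Z} (a : Tel Z) : Tel Z.
Proof.
  refine (mkT (fun z => ~ tV a z) (fun z => ~ tU a z) _).
  destruct (tC a); [right|left]; firstorder.
Defined.
Definition Tbot {Z} : Tel Z := mkT (fun _ => False) (fun _ => False) (or_intror (fun _ h => h)).
Definition Ttop {Z} : Tel Z := mkT (fun _ => True) (fun _ => True) (or_introl (fun _ => I)).

Ltac teq := apply Teq; simpl; intros; try tauto.

Lemma Tstar_spec {Z} (x y : Tel Z) : Tmeet x y = Tbot <-> Tmeet y (Tstar x) = y.
Proof.
  split; intro H.
  - pose proof (TeqU _ _ H) as HU; pose proof (TeqV _ _ H) as HV; simpl in *.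
    teq.
    + split; [tauto|]. intros Hy; split; [exact Hy|]; intros Hx. exact (proj1 (HU z) (conj Hx Hy)).
    + split; [tauto|]. intros Hy; split; [exact Hy|]; intros w Hw.
      destruct (tC y) as [Ay|Ay]; [|exact (Ay z Hy)].
      exact (proj1 (HU w) (conj Hw (Ay w))).
  - pose proof (TeqU _ _ H) as HU; pose proof (TeqV _ _ H) as HV; simpl in *.
    teq.
    + split; [|tauto]. intros [Hx Hy]. exact (proj2 (proj2 (HU z) Hy) Hx).
    + split; [|tauto]. intros [Hx Hy]. destruct (proj2 (HV z) Hy) as [_ Hn].
      destruct (tC x) as [Ax|Ax]; [exact (Hn z (Ax z))| exact (Ax z Hx)].
Qed.

Definition Tpcdm (Z : Type) : pcdm.
Proof.
  refine (@PCDM (Tel Z) Tmeet Tjoin Tstar Tdm Tbot Ttop _ _ _ _ _ _ _ _ _ Tstar_spec _ _ _);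
  intros; teq; try (apply NNPP_iff || idtac).
  all: try (split; [intro; apply NNPP; auto| tauto]).
  all: try tauto.
Defined.




Ltac pg := match goal with |- ?G => idtac "GOAL:" G end.
Lemma T_K1 Z : inK1 (Tpcdm Z).
Proof.
  unfold inK1, le; simpl. split; [|split].
  - intros x y; teq.
  - intros x y; teq.
    + split; [tauto|]. intros H; split; [exact H|].
      destruct (classic (tV y z)) as [Hv|Hv]; [left|right; exact Hv].
      destruct (tC y) as [A|A]; [apply A|exfalso; exact (A z Hv)].
    + split; [tauto|]. intros [H1 H2]. exfalso.
      destruct (tC x) as [A|A]; [exact (H2 (A z))|exact (A z H1)].
  - intros x; teq.
    split; intros H; intro Hn; apply H; intro H'; apply Hn.
    + intros w Hw; apply Hw; split.
      * destruct H' as [_ H']. apply NNPP, H'.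
      * exact (proj2 H').
    + split.
      * specialize (H' z). apply NNPP. intro Hz; apply H'. intros [Hz' _]. exact (Hz Hz').
      * intros w Hw. specialize (H' w). apply H'. intros [Hw' _]. exact (Hw Hw').
Qed.

Definition Two : pcdm.
Proof.
  refine (@PCDM bool andb orb negb negb false true _ _ _ _ _ _ _ _ _ _ _ _ _);
  try (intros; destruct x; try destruct y; try destruct z; reflexivity).
  - intros x y; destruct x, y; simpl; split; intro; try reflexivity; discriminate.
  - reflexivity.
Defined.

Lemma Two_K1 : inK1 Two.
Proof.
  unfold inK1, le; simpl; split; [|split]; intros; destruct x; try destruct y; reflexivity.
Qed.

Definition hom (A B : pcdm) (h : A -> B) : Prop :=
  (forall x y, h (meet A x y) = meet B (h x) (h y)) /\
  (forall x y, h (join A x y) = join B (h x) (h y)) /\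
  (forall x, h (star A x) = star B (h x)) /\
  (forall x, h (dm A x) = dm B (h x)) /\
  h (bot A) = bot B /\ h (top A) = top B.

Lemma eval_hom A B h (H : hom A B h) v t : h (eval A v t) = eval B (fun n => h (v n)) t.
Proof.
  destruct H as (Hm & Hj & Hs & Hd & Hb & Ht).
  induction t; simpl; try congruence.
Qed.

Lemma sat_inj A B h (H : hom A B h) (Hi : forall x y, h x = h y -> x = y) e :
  satisfies B e -> satisfies A e.
Proof.
  intros Hs v. apply Hi. rewrite !(eval_hom A B h H). apply Hs.
Qed.

Definition pullT {Y Z} (p : Z -> Y) (Hp : forall y, exists z, p z = y) (a : Tel Y) : Tel Z.
Proof.
  refine (mkT (fun z => tU a (p z)) (fun z => tV a (p z)) _).
  destruct (tC a) as [A|A]; [left|right]; intros; apply A.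
Defined.

Lemma pullT_hom {Y Z} (p : Z -> Y) Hp : hom (Tpcdm Y) (Tpcdm Z) (pullT p Hp).
Proof.
  unfold hom; simpl; repeat split; intros; apply Teq; simpl; intros; try tauto.
  split.
  - intros H w Hw. apply (H (p w)). exact Hw.
  - intros H w Hw. destruct (Hp w) as [z' <-]. exact (H z' Hw).
Qed.

Lemma pullT_inj {Y Z} (p : Z -> Y) Hp a b : pullT p Hp a = pullT p Hp b -> a = b.
Proof.
  intro H. pose proof (TeqU _ _ H) as HU; pose proof (TeqV _ _ H) as HV; simpl in *.
  apply Teq; intro y; destruct (Hp y) as [z <-]; auto.
Qed.

Definition twoT {Z} (b : bool) : Tel Z := if b then Ttop else Tbot.

Lemma twoT_hom Z : hom Two (Tpcdm Z) twoT.
Proof.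
  unfold hom; simpl; repeat split; intros; try destruct x; try destruct y; apply Teq; simpl; intros; try tauto.
  all: split; intros; try tauto; try (intros w Hw; exact Hw).
  all: try (apply H; exact I).
  all: intros w Hw; exact Hw.
Qed.


Lemma meet_idem (A : pcdm) x : meet A x x = x.
Proof.
  pose proof (meet_absorb A x (meet A x x)) as H. rewrite (join_absorb A x x) in H. exact H.
Qed.
Lemma join_idem (A : pcdm) x : join A x x = x.
Proof.
  pose proof (join_absorb A x (join A x x)) as H. rewrite (meet_absorb A x x) in H. exact H.
Qed.
Lemma le_refl (A : pcdm) x : le A x x.
Proof. apply meet_idem. Qed.
Lemma le_trans (A : pcdm) x y z : le A x y -> le A y z -> le A x z.
Proof. unfold le; intros H1 H2. rewrite <- H1, <- meetA, H2. reflexivity. Qed.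
Lemma le_antisym (A : pcdm) x y : le A x y -> le A y x -> x = y.
Proof. unfold le; intros H1 H2. rewrite <- H1, meetC. exact H2. Qed.
Lemma le_meet_l (A : pcdm) x y : le A (meet A x y) x.
Proof. unfold le. rewrite (meetC A x y), <- meetA, meet_idem. reflexivity. Qed.
Lemma le_meet_r (A : pcdm) x y : le A (meet A x y) y.
Proof. unfold le. rewrite <- meetA, meet_idem. reflexivity. Qed.
Lemma le_join_l (A : pcdm) x y : le A x (join A x y).
Proof. apply meet_absorb. Qed.
Lemma le_join_r (A : pcdm) x y : le A y (join A x y).
Proof. rewrite joinC. apply meet_absorb. Qed.
Lemma le_join (A : pcdm) x y : le A x y -> join A x y = y.
Proof. unfold le; intro H. rewrite <- H, joinC, meetC. apply join_absorb. Qed.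
Lemma join_le (A : pcdm) x y : join A x y = y -> le A x y.
Proof. intro H. rewrite <- H. apply le_join_l. Qed.
Lemma meet_glb (A : pcdm) x y z : le A z x -> le A z y -> le A z (meet A x y).
Proof. unfold le; intros H1 H2. rewrite meetA, H1, H2. reflexivity. Qed.
Lemma join_lub (A : pcdm) x y z : le A x z -> le A y z -> le A (join A x y) z.
Proof.
  intros H1 H2. apply join_le. apply le_join in H1. apply le_join in H2.
  rewrite <- joinA, H2, H1. reflexivity.
Qed.
Lemma le_bot (A : pcdm) x : le A (bot A) x.
Proof. apply meet_bot. Qed.
Lemma le_top (A : pcdm) x : le A x (top A).
Proof. unfold le. rewrite meetC. apply meet_top. Qed.
Lemma meet_mono (A : pcdm) x y x' y' : le A x x' -> le A y y' -> le A (meet A x y) (meet A x' y').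
Proof.
  intros; apply meet_glb; eapply le_trans; try eassumption; [apply le_meet_l|apply le_meet_r].
Qed.
Lemma dm_top (A : pcdm) : dm A (top A) = bot A.
Proof. rewrite <- (dm_bot A), dmK. reflexivity. Qed.
Lemma dm_meet (A : pcdm) x y : dm A (meet A x y) = join A (dm A x) (dm A y).
Proof.
  rewrite <- (dmK A (join A (dm A x) (dm A y))), dm_join, !dmK. reflexivity.
Qed.
Lemma dm_anti (A : pcdm) x y : le A x y -> le A (dm A y) (dm A x).
Proof.
  intro H. apply le_join in H. unfold le. rewrite <- H, dm_join, meetC, meetA, meet_idem.
  reflexivity.
Qed.
Lemma meet_star (A : pcdm) x : meet A x (star A x) = bot A.
Proof. apply (star_spec A x (star A x)). apply meet_idem. Qed.
Lemma star_intro (A : pcdm) g x : meet A g x = bot A -> le A g (star A x).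
Proof. intro H. apply (star_spec A x g). rewrite meetC. exact H. Qed.
Lemma le_starstar (A : pcdm) x : le A x (star A (star A x)).
Proof. apply star_intro. apply meet_star. Qed.
Lemma le_bot_eq (A : pcdm) x : le A x (bot A) -> x = bot A.
Proof. intro H. apply le_antisym; auto. apply le_bot. Qed.

Definition filt (A : pcdm) (F : A -> Prop) :=
  F (top A) /\ (forall x y, F x -> F y -> F (meet A x y)) /\ (forall x y, F x -> le A x y -> F y).
Definition prime (A : pcdm) (P : A -> Prop) :=
  filt A P /\ ~ P (bot A) /\ (forall x y, P (join A x y) -> P x \/ P y).
Definition ult (A : pcdm) (M : A -> Prop) :=
  filt A M /\ ~ M (bot A) /\ (forall x, M x \/ M (star A x)).

Definition gen (A : pcdm) (F : A -> Prop) (a : A) : A -> Prop :=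
  fun t => exists g, F g /\ le A (meet A g a) t.

Lemma gen_filt A F a : filt A F -> filt A (gen A F a).
Proof.
  intros (Ht & Hm & Hu). repeat split.
  - exists (top A); split; auto. apply le_top.
  - intros x y (g1 & H1 & L1) (g2 & H2 & L2). exists (meet A g1 g2); split; auto.
    apply meet_glb.
    + eapply le_trans; [|exact L1]. apply meet_mono; [apply le_meet_l|apply le_refl].
    + eapply le_trans; [|exact L2]. apply meet_mono; [apply le_meet_r|apply le_refl].
  - intros x y (g & H & L) Lxy. exists g; split; auto. eapply le_trans; eauto.
Qed.
Lemma gen_sub A F a x : filt A F -> F x -> gen A F a x.
Proof. intros _ H. exists x; split; auto. apply le_meet_l. Qed.
Lemma gen_a A F a : filt A F -> gen A F a a.
Proof. intros (Ht & _). exists (top A); split; auto. apply le_meet_r. Qed.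

Lemma ext_filter (A : pcdm) (F : A -> Prop) (b : A) : filt A F -> ~ F b ->
  exists G, filt A G /\ (forall x, F x -> G x) /\ ~ G b /\
    (forall x, ~ G x -> exists g, G g /\ le A (meet A g x) b).
Proof.
  intros HF Hb.
  set (P := fun H : A -> Prop => (forall t, ~ H t) \/ (filt A H /\ (forall x, F x -> H x) /\ ~ H b)).
  destruct (@Zorn_bigcup A P) as [G [HG Hmax]].
  - intros Fm HFm Htot. unfold P.
    destruct (classic (exists t X, Fm X /\ X t)) as [[t0 [X0 [HX0 Ht0]]]|Hn];
      [right|left; intros t [X HX Ht]; apply Hn; exists t, X; auto].
    assert (HP : forall X, Fm X -> forall t, X t -> filt A X /\ (forall x, F x -> X x) /\ ~ X b).
    { intros X HX t Ht. destruct (HFm X HX) as [E|E]; [exfalso; exact (E t Ht)|exact E]. }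
    destruct (HP X0 HX0 t0 Ht0) as ((Ht & Hm & Hu) & HFX & HbX).
    repeat split.
    + exists X0; auto.
    + intros x y [X1 H1 Hx] [X2 H2 Hy].
      destruct (Htot X1 X2 H1 H2) as [S|S].
      * exists X2; [exact H2|]. destruct (HP X2 H2 y Hy) as ((_ & Hm2 & _) & _). apply Hm2; [apply S; exact Hx|exact Hy].
      * exists X1; [exact H1|]. destruct (HP X1 H1 x Hx) as ((_ & Hm1 & _) & _). apply Hm1; [exact Hx|apply S; exact Hy].
    + intros x y [X1 H1 Hx] L. exists X1; auto. destruct (HP X1 H1 x Hx) as ((_ & _ & Hu1) & _). eauto.
    + intros x Hx. exists X0; auto.
    + intros [X1 H1 Hx]. destruct (HP X1 H1 b Hx) as (_ & _ & Hb1). auto.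
  - assert (HGne : ~ (forall t, ~ G t)).
    { intro E. apply (Hmax F).
      - split; [intros t Ht; exfalso; exact (E t Ht)|].
        intro S. apply (E (top A)). apply S. exact (proj1 HF).
      - right; split; auto. }
    destruct HG as [E|(HGf & HFG & HbG)]; [contradiction|].
    exists G; split; [exact HGf|]; split; [exact HFG|]; split; [exact HbG|].
    intros x Hx. apply NNPP; intro Hno.
    apply (Hmax (gen A G x)).
    + split; [intros t Ht; apply gen_sub; auto|].
      intro S. apply Hx. apply S. apply gen_a; auto.
    + right. split; [apply gen_filt; auto|]. split; [intros y Hy; apply gen_sub; auto|].
      intros [g [Hg L]]. apply Hno. exists g; auto.
Qed.

Lemma pft (A : pcdm) F b : filt A F -> ~ F b ->
  exists P, prime A P /\ (forall x, F x -> P x) /\ ~ P b.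
Proof.
  intros HF Hb. destruct (ext_filter A F b HF Hb) as (G & HG & HFG & HbG & Hmx).
  exists G; split; [split; [exact HG|split]|split; [exact HFG|exact HbG]].
  - intro H0. apply HbG. destruct HG as (_ & _ & Hu). eapply Hu; eauto. apply le_bot.
  - intros x y Hxy. apply NNPP; intro Hn.
    destruct (Hmx x) as [g1 [H1 L1]]; [tauto|].
    destruct (Hmx y) as [g2 [H2 L2]]; [tauto|].
    apply HbG. destruct HG as (_ & Hm & Hu).
    apply (Hu (meet A (meet A g1 g2) (join A x y))); [apply Hm; auto|].
    rewrite meet_joinDr. apply join_lub.
    + eapply le_trans; [|exact L1]. apply meet_mono; [apply le_meet_l|apply le_refl].
    + eapply le_trans; [|exact L2]. apply meet_mono; [apply le_meet_r|apply le_refl].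
Qed.

Lemma uext (A : pcdm) F : filt A F -> ~ F (bot A) -> exists M, ult A M /\ (forall x, F x -> M x).
Proof.
  intros HF Hb. destruct (ext_filter A F (bot A) HF Hb) as (G & HG & HFG & HbG & Hmx).
  exists G; split; [split; [exact HG|split]|exact HFG].
  - intro H0. apply HbG. destruct HG as (_ & _ & Hu). eapply Hu; eauto. apply le_bot.
  - intro x. destruct (classic (G x)) as [H|H]; [left; auto|right].
  destruct (Hmx x H) as [g [Hg L]]. apply le_bot_eq in L.
  destruct HG as (_ & _ & Hu). eapply Hu; [exact Hg|]. apply star_intro; auto.
Qed.

Definition gP (A : pcdm) (P : A -> Prop) : A -> Prop := fun a => ~ P (dm A a).

Lemma ult_prime (A : pcdm) M : ult A M -> prime A M.
Proof.
  intros (HF & Hb & Hs). split; [exact HF|split; [exact Hb|]].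
  intros x y Hxy. apply NNPP; intro Hn.
  destruct (Hs x) as [Hx|Hx]; [tauto|]. destruct (Hs y) as [Hy|Hy]; [tauto|].
  destruct HF as (_ & Hm & Hu). apply Hb.
  apply (Hu (meet A (meet A (star A x) (star A y)) (join A x y))); [apply Hm; auto|].
  rewrite meet_joinDr. apply join_lub.
  - eapply le_trans; [apply meet_mono; [apply le_meet_l|apply le_refl]|].
    rewrite meetC, meet_star. apply le_refl.
  - eapply le_trans; [apply meet_mono; [apply le_meet_r|apply le_refl]|].
    rewrite meetC, meet_star. apply le_refl.
Qed.

Lemma ult_star (A : pcdm) M x : ult A M -> (M (star A x) <-> ~ M x).
Proof.
  intros (HF & Hb & Hs). split.
  - intros H1 H2. apply Hb. destruct HF as (_ & Hm & _). rewrite <- (meet_star A x). apply Hm; auto.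
  - intro H. destruct (Hs x); tauto.
Qed.

Lemma ult_starstar (A : pcdm) M x : ult A M -> (M (star A (star A x)) <-> M x).
Proof. intro H. rewrite (ult_star A M _ H), (ult_star A M _ H). tauto. Qed.

Lemma g_prime (A : pcdm) P : prime A P -> prime A (gP A P).
Proof.
  intros ((Ht & Hm & Hu) & Hb & Hp). unfold gP. split; [split; [|split]|split].
  - rewrite dm_top. exact Hb.
  - intros x y Hx Hy H. rewrite dm_meet in H. destruct (Hp _ _ H); tauto.
  - intros x y Hx L H. apply Hx. eapply Hu; [exact H|]. apply dm_anti; exact L.
  - rewrite dm_bot. tauto.
  - intros x y H. rewrite dm_join in H. apply NNPP; intro Hn. apply H. apply Hm; apply NNPP; tauto.
Qed.

Lemma gg (A : pcdm) P a : gP A (gP A P) a <-> P a.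
Proof. unfold gP. rewrite dmK. split; [apply NNPP|tauto]. Qed.

Lemma g_anti (A : pcdm) (P Q : A -> Prop) : (forall a, P a -> Q a) -> forall a, gP A Q a -> gP A P a.
Proof. unfold gP; firstorder. Qed.

Lemma ult_max (A : pcdm) M Q : ult A M -> prime A Q -> (forall a, M a -> Q a) -> forall a, Q a -> M a.
Proof.
  intros HM (HQf & HQb & _) HMQ a Ha. apply NNPP; intro Hn.
  apply (proj2 (ult_star A M a HM)) in Hn. apply HQb.
  destruct HQf as (_ & Hm & _). rewrite <- (meet_star A a). apply Hm; auto.
Qed.

Lemma prime_up (A : pcdm) P x y : prime A P -> P x -> le A x y -> P y.
Proof. intros ((_ & _ & Hu) & _) Hx L. eauto. Qed.
Lemma prime_meet (A : pcdm) P x y : prime A P -> P x -> P y -> P (meet A x y).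
Proof. intros ((_ & Hm & _) & _) Hx Hy. eauto. Qed.
Lemma prime_top (A : pcdm) P : prime A P -> P (top A).
Proof. intros ((Ht & _) & _). exact Ht. Qed.

Lemma kleene_cmp (A : pcdm) (HK : inK1 A) P : prime A P ->
  (forall a, P a -> gP A P a) \/ (forall a, gP A P a -> P a).
Proof.
  intros HP. destruct HK as (_ & Hkl & _).
  apply NNPP; intro Hn. apply not_or_and in Hn. destruct Hn as [H1 H2].
  apply not_all_ex_not in H1. destruct H1 as [x Hx]. apply imply_to_and in Hx. destruct Hx as [Hx Hgx].
  apply not_all_ex_not in H2. destruct H2 as [y Hy]. apply imply_to_and in Hy. destruct Hy as [Hgy Hy].
  unfold gP in *. apply NNPP in Hgx.
  assert (P (join A y (dm A y))) as Hj.
  { apply (prime_up A P (meet A x (dm A x))); [exact HP| apply prime_meet; auto |apply Hkl]. }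
  destruct HP as (_ & _ & Hp). destruct (Hp _ _ Hj); tauto.
Qed.

Lemma depth (A : pcdm) (HK : inK1 A) P Q R : prime A P -> prime A Q -> prime A R ->
  (forall a, P a -> Q a) -> (forall a, Q a -> R a) ->
  (exists x, Q x /\ ~ P x) -> (exists y, R y /\ ~ Q y) -> False.
Proof.
  intros HP HQ HR HPQ HQR [x [Qx Px]] [y [Ry Qy]].
  destruct HK as (Hreg & _ & _).
  assert (Q (dm A (star A (dm A x)))) as H1.
  { apply NNPP; intro Hn.
    assert (gP A P (star A (dm A x))) as G1 by (apply (g_anti A P Q HPQ); exact Hn).
    assert (gP A P (dm A x)) as G2 by (unfold gP; rewrite dmK; exact Px).
    pose proof (prime_meet A _ _ _ (g_prime A P HP) G2 G1) as G3.
    rewrite meet_star in G3. unfold gP in G3. rewrite dm_bot in G3. apply G3, prime_top, HP. }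
  assert (Q (join A y (star A y))) as H2.
  { apply (prime_up A Q (meet A x (dm A (star A (dm A x))))); [exact HQ| apply prime_meet; auto |apply Hreg]. }
  destruct HQ as (_ & _ & Hp). destruct (Hp _ _ H2) as [H3|H3]; [tauto|].
  destruct HR as ((_ & Hm & _) & Hb & _). apply Hb. rewrite <- (meet_star A y). apply Hm; auto.
Qed.

Lemma nonult_ext (A : pcdm) P : prime A P -> ~ ult A P ->
  exists M, ult A M /\ (forall a, P a -> M a) /\ exists x, M x /\ ~ P x.
Proof.
  intros HP Hn. assert (exists x, ~ P x /\ ~ P (star A x)) as [x [H1 H2]].
  { apply NNPP; intro E. apply Hn. destruct HP as (HF & Hb & _). split; [exact HF|split; [exact Hb|]].
    intro x. apply NNPP; intro E2. apply E. exists x. tauto. }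
  destruct HP as (HF & Hb & Hp).
  destruct (uext A (gen A P x)) as [M [HM HsM]].
  - apply gen_filt; auto.
  - intros [g [Hg L]]. apply H2. destruct HF as (_ & _ & Hu). eapply Hu; [exact Hg|].
    apply star_intro. apply le_bot_eq. exact L.
  - exists M; split; [exact HM|split].
    + intros a Ha. apply HsM. apply gen_sub; auto.
    + exists x; split; auto. apply HsM. apply gen_a; auto.
Qed.

Lemma prime_ult_or (A : pcdm) (HK : inK1 A) P : prime A P -> ult A P \/ ult A (gP A P).
Proof.
  intros HP. destruct (classic (ult A P)) as [H|H]; [left; exact H|right].
  destruct (nonult_ext A P HP H) as [M1 [HM1 [HPM1 [x [Hx1 Hx2]]]]].
  apply NNPP; intro H'.
  destruct (nonult_ext A (gP A P) (g_prime A P HP) H') as [M2 [HM2 [HPM2 [y [Hy1 Hy2]]]]].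
  apply (depth A HK (gP A M2) P M1).
  - apply g_prime, ult_prime, HM2.
  - exact HP.
  - apply ult_prime, HM1.
  - intros a Ha. apply (gg A P a). exact (g_anti A _ _ HPM2 a Ha).
  - exact HPM1.
  - exists (dm A y). split.
    + unfold gP in Hy2. apply NNPP in Hy2. exact Hy2.
    + unfold gP. rewrite dmK. tauto.
  - exists x; auto.
Qed.

Lemma ult_gsub (A : pcdm) (HK : inK1 A) M : ult A M -> forall a, gP A M a -> M a.
Proof.
  intros HM. destruct (kleene_cmp A HK M (ult_prime A M HM)) as [H|H]; [|exact H].
  apply (ult_max A M (gP A M) HM (g_prime A M (ult_prime A M HM)) H).
Qed.

Lemma ult_stardm (A : pcdm) M y : ult A M -> (M (star A (dm A y)) <-> gP A M y).
Proof. intro HM. unfold gP. apply ult_star; exact HM. Qed.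

Lemma comp_trans (A : pcdm) (HK : inK1 A) M1 M2 M3 : ult A M1 -> ult A M2 -> ult A M3 ->
  (forall a, gP A M1 a -> M2 a) -> (forall a, gP A M2 a -> M3 a) ->
  forall a, gP A M1 a -> M3 a.
Proof.
  intros H1 H2 H3 H12 H23 t Ht. apply NNPP; intro Hn.
  pose proof HK as (_ & _ & Hr1).
  specialize (Hr1 (dm A (star A t))). simpl in Hr1.
  set (u := meet A (dm A (star A t)) (star A (dm A (dm A (star A t))))) in Hr1.
  assert (Hu : gP A M1 u).
  { apply prime_meet; [apply g_prime, ult_prime, H1| |].
    - unfold gP. rewrite dmK. rewrite (ult_star A M1 t H1). intro Hc; apply Hc. apply (ult_gsub A HK M1 H1), Ht.
    - rewrite dmK. apply (prime_up A (gP A M1) t); [apply g_prime, ult_prime, H1|exact Ht|apply le_starstar]. }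
  apply (proj2 (ult_stardm A M1 u H1)) in Hu.
  rewrite Hr1 in Hu. apply (ult_stardm A M1 _ H1) in Hu. apply H12 in Hu.
  apply (ult_stardm A M2 _ H2) in Hu.
  assert (gP A M2 (star A (star A t))) as Hs.
  { apply (prime_up A (gP A M2) u); [apply g_prime, ult_prime, H2|exact Hu|]. unfold u. rewrite dmK. apply le_meet_r. }
  apply H23 in Hs. apply (ult_starstar A M3 t H3) in Hs. contradiction.
Qed.

Lemma star_ext (A : pcdm) M a : ult A M -> ~ gP A M (star A a) ->
  exists M', ult A M' /\ (forall b, gP A M b -> M' b) /\ M' a.
Proof.
  intros HM Hn. pose proof (g_prime A M (ult_prime A M HM)) as (HF & Hb & _).
  destruct (uext A (gen A (gP A M) a)) as [M' [HM' Hs]].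
  - apply gen_filt; auto.
  - intros [g [Hg L]]. apply Hn. destruct HF as (_ & _ & Hu). eapply Hu; [exact Hg|].
    apply star_intro. apply le_bot_eq. exact L.
  - exists M'; split; [exact HM'|split].
    + intros b Hb'. apply Hs. apply gen_sub; auto.
    + apply Hs. apply gen_a; auto.
Qed.

Definition Zc (A : pcdm) (M0 : A -> Prop) : Type :=
  { M : A -> Prop | ult A M /\ forall t, gP A M0 t -> M t }.

Lemma Zc_pair (A : pcdm) (HK : inK1 A) M0 (HM0 : ult A M0) (M1 M2 : Zc A M0) :
  forall t, gP A (proj1_sig M1) t -> proj1_sig M2 t.
Proof.
  destruct M1 as [M1 [H1 S1]], M2 as [M2 [H2 S2]]; simpl.
  apply (comp_trans A HK M1 M0 M2 H1 HM0 H2); [|exact S2].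
  intros a Ha. apply (gg A M0 a). exact (g_anti A _ _ S1 a Ha).
Qed.

Definition repr (A : pcdm) (HK : inK1 A) M0 (HM0 : ult A M0) (x : A) : Tel (Zc A M0).
Proof.
  refine (mkT (fun M => proj1_sig M x) (fun M => gP A (proj1_sig M) x) _).
  destruct (classic (exists M1 : Zc A M0, gP A (proj1_sig M1) x)) as [[M1 H1]|Hn]; [left|right].
  - intros M. exact (Zc_pair A HK M0 HM0 M1 M x H1).
  - intros M HM. apply Hn. exists M; exact HM.
Defined.

Lemma prime_meet_iff (A : pcdm) P x y : prime A P -> (P (meet A x y) <-> P x /\ P y).
Proof.
  intro HP; split.
  - intro H; split; eapply prime_up; eauto; [apply le_meet_l|apply le_meet_r].
  - intros [H1 H2]; apply prime_meet; auto.
Qed.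
Lemma prime_join_iff (A : pcdm) P x y : prime A P -> (P (join A x y) <-> P x \/ P y).
Proof.
  intro HP; split.
  - intro H. destruct HP as (_ & _ & Hp). auto.
  - intros [H|H]; eapply prime_up; eauto; [apply le_join_l|apply le_join_r].
Qed.

Lemma repr_hom (A : pcdm) (HK : inK1 A) M0 (HM0 : ult A M0) :
  hom A (Tpcdm (Zc A M0)) (repr A HK M0 HM0).
Proof.
  unfold hom; simpl.
  assert (HP : forall M : Zc A M0, prime A (proj1_sig M)) by (intros M; destruct M as [M1 HH]; simpl; destruct HH as [H _]; apply ult_prime, H).
  assert (HU : forall M : Zc A M0, ult A (proj1_sig M)) by (intros M; destruct M as [M1 HH]; simpl; destruct HH as [H _]; exact H).
  assert (HG : forall M : Zc A M0, prime A (gP A (proj1_sig M))) by (intros M; apply g_prime, HP).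
  repeat split; intros; apply Teq; simpl; intro M.
  - apply prime_meet_iff, HP.
  - apply prime_meet_iff, HG.
  - apply prime_join_iff, HP.
  - apply prime_join_iff, HG.
  - apply ult_star, HU.
  - split.
    + intros H M' HM'. apply (ult_star A _ x (HU M')) in HM'; [exact HM'|].
      apply (Zc_pair A HK M0 HM0 M M' _ H).
    + intros H. apply NNPP; intro Hn.
      destruct M as [M [HM SM]]; simpl in *.
      destruct (star_ext A M x HM Hn) as [M' [HM' [SM' Hx]]].
      assert (S' : forall t, gP A M0 t -> M' t).
      { apply (comp_trans A HK M0 M M' HM0 HM HM'); auto. }
      exact (H (exist _ M' (conj HM' S')) Hx).
  - unfold gP. split; [intros H Hn; exact (Hn H)|apply NNPP].
  - unfold gP. rewrite dmK. tauto.
  - split; [apply (HP M)|tauto].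
  - unfold gP. rewrite dm_bot. split; [intro H; apply H, prime_top, HP|tauto].
  - split; [tauto|intros _; apply prime_top, HP].
  - unfold gP. rewrite dm_top. split; [tauto|intros _; apply (HP M)].
Qed.

Lemma sep1 (A : pcdm) (HK : inK1 A) a b : ~ le A a b ->
  exists (Z : Type) (h : A -> Tel Z), hom A (Tpcdm Z) h /\ h a <> h b.
Proof.
  intros Hab.
  destruct (pft A (fun t => le A a t) b) as [P [HP [HaP HbP]]].
  - split; [apply le_top|split].
    + intros; apply meet_glb; auto.
    + intros; eapply le_trans; eauto.
  - exact Hab.
  - assert (HaP' : P a) by (apply HaP, le_refl).
    destruct (prime_ult_or A HK P HP) as [HU|HU].
    + exists (Zc A P), (repr A HK P HU). split; [apply repr_hom|].
      intro E. apply TeqU with (z := exist _ P (conj HU (ult_gsub A HK P HU))) in E.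
      simpl in E. tauto.
    + exists (Zc A (gP A P)), (repr A HK _ HU). split; [apply repr_hom|].
      intro E. apply TeqV with (z := exist _ (gP A P) (conj HU (ult_gsub A HK _ HU))) in E.
      simpl in E. rewrite !gg in E. tauto.
Qed.

Lemma sep (A : pcdm) (HK : inK1 A) a b : a <> b ->
  exists (Z : Type) (h : A -> Tel Z), hom A (Tpcdm Z) h /\ h a <> h b.
Proof.
  intros Hab. destruct (classic (le A a b)) as [H1|H1]; [|apply sep1; auto].
  destruct (classic (le A b a)) as [H2|H2]; [exfalso; apply Hab, le_antisym; auto|].
  destruct (sep1 A HK b a H2) as [Z [h [Hh E]]]. exists Z, h; split; auto.
Qed.

From mathcomp Require Import all_boot.
Require Import Defs.
Set Warnings "-notation-overridden".


Definition dec (P : Prop) : bool := if excluded_middle_informative P then true else false.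
Lemma decP (P : Prop) : dec P = true <-> P.
Proof. unfold dec; destruct (excluded_middle_informative P); split; auto; discriminate. Qed.

Definition Lset {X} (S : X -> Prop) : Tel X := mkT S (fun _ => False) (or_intror (fun _ h => h)).
Definition cT {X} : Tel X := Lset (fun _ => True).

Definition closedR {X} (R : Tel X -> Prop) :=
  R Tbot /\ R Ttop /\ (forall a b, R a -> R b -> R (Tmeet a b)) /\
  (forall a b, R a -> R b -> R (Tjoin a b)) /\ (forall a, R a -> R (Tstar a)) /\
  (forall a, R a -> R (Tdm a)).

Lemma noc_bt {X} (R : Tel X -> Prop) : closedR R -> ~ R cT -> forall y, R y -> y = Tbot \/ y = Ttop.
Proof.
  intros (Hb & Ht & Hm & Hj & Hs & Hd) Hc y Hy.
  destruct (classic (exists z, tV y z)) as [[z Hz]|Hn].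
  - assert (HU : forall w, tU y w) by (destruct (tC y) as [A|A]; [exact A|exfalso; exact (A z Hz)]).
    destruct (classic (forall w, tV y w)) as [HV|HV].
    + right. apply Teq; simpl; intros; split; auto.
    + exfalso. apply Hc. apply not_all_ex_not in HV. destruct HV as [w Hw].
      replace cT with (Tjoin (Tdm y) (Tstar (Tdm y))); [apply Hj; auto|].
      apply Teq; simpl; intro u; split; try tauto; try (intros _; apply classic).
      intros [H|H]; [exact (H (HU u))|]. exact (H w Hw).
  - destruct (classic (exists z, tU y z)) as [[z Hz]|Hn2].
    + exfalso. apply Hc.
      replace cT with (Tjoin y (Tstar y)); [apply Hj; auto|].
      apply Teq; simpl; intro u; split; try tauto; try (intros _; apply classic).
      intros [H|H]; [apply Hn; exists u; exact H|]. exact (H z Hz).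
    + left. apply Teq; simpl; intro u; split; try tauto.
      * intro H; apply Hn2; exists u; exact H.
      * intro H; apply Hn; exists u; exact H.
Qed.

Lemma R_Lmeet {X} (R : Tel X -> Prop) S T : closedR R -> R (Lset S) -> R (Lset T) ->
  R (Lset (fun x => S x /\ T x)).
Proof.
  intros (Hb & Ht & Hm & _) H1 H2. replace (Lset (fun x => S x /\ T x)) with (Tmeet (Lset S) (Lset T)); auto.
  apply Teq; simpl; tauto.
Qed.
Lemma R_Ljoin {X} (R : Tel X -> Prop) S T : closedR R -> R (Lset S) -> R (Lset T) ->
  R (Lset (fun x => S x \/ T x)).
Proof.
  intros (Hb & Ht & Hm & Hj & _) H1 H2. replace (Lset (fun x => S x \/ T x)) with (Tjoin (Lset S) (Lset T)); auto.
  apply Teq; simpl; tauto.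
Qed.
Lemma R_Lnot {X} (R : Tel X -> Prop) S : closedR R -> R cT -> R (Lset S) -> R (Lset (fun x => ~ S x)).
Proof.
  intros (Hb & Ht & Hm & Hj & Hs & _) Hc H1.
  destruct (classic (exists z, S z)) as [[z Hz]|Hn].
  - replace (Lset (fun x => ~ S x)) with (Tstar (Lset S)); auto.
    apply Teq; simpl; intros; split; try tauto; try (intros H; exact (H z Hz)).
  - replace (Lset (fun x => ~ S x)) with (@cT X); auto.
    apply Teq; simpl; intros u; split; try tauto; try (intros _ H; apply Hn; exists u; exact H).
Qed.
Lemma R_Lext {X} (R : Tel X -> Prop) S T : (forall x, S x <-> T x) -> R (Lset S) -> R (Lset T).
Proof. intros E H. replace (Lset T) with (Lset S); auto. apply Teq; simpl; firstorder. Qed.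
Lemma R_Lconst {X} (R : Tel X -> Prop) (P : Prop) : closedR R -> R cT -> R (Lset (fun _ : X => P)).
Proof.
  intros (Hb & _) Hc. destruct (classic P) as [H|H].
  - apply (R_Lext R (fun _ => True)); [tauto|exact Hc].
  - apply (R_Lext R (fun _ => False)); [tauto|].
    replace (Lset (fun _ : X => False)) with (@Tbot X); auto; try (apply Teq; simpl; tauto).
Qed.

Lemma R_sig {X} (R : Tel X -> Prop) (Ss : list (X -> Prop)) : closedR R -> R cT ->
  (forall S, List.In S Ss -> R (Lset S)) ->
  forall s : list bool, R (Lset (fun x => List.map (fun S => dec (S x)) Ss = s)).
Proof.
  intros HR Hc. induction Ss as [|S Ss IH]; intros HS s.
  - apply (R_Lext R (fun _ => List.nil = s)); [simpl; tauto|]. apply R_Lconst; auto.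
  - destruct s as [|b s].
    + apply (R_Lext R (fun _ => False)); [simpl; intros; split; [tauto|discriminate]|].
      apply R_Lconst; auto.
    + assert (HS' : forall S', List.In S' Ss -> R (Lset S')) by (intros; apply HS; simpl; auto).
      apply (R_Lext R (fun x => (if b then S x else ~ S x) /\ List.map (fun S => dec (S x)) Ss = s)).
      * intros x; simpl. split.
        -- intros [H1 H2]. f_equal; auto. destruct b; simpl in H1.
           ++ apply decP; exact H1.
           ++ unfold dec; destruct (excluded_middle_informative (S x)) as [s0|s0]; [exfalso; exact (H1 s0)|reflexivity].
        -- intros H. injection H as H1 H2. split; auto. destruct b.
           ++ apply decP; exact H1.
           ++ simpl; unfold dec in H1; destruct (excluded_middle_informative (S x)); [discriminate|exact n].
      * apply R_Lmeet; auto. destruct b.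
        -- apply HS; simpl; auto.
        -- apply R_Lnot; auto. apply HS; simpl; auto.
Qed.

Lemma fin_core {X} (R : Tel X -> Prop) (HR : closedR R) (Hc : R cT) (k : nat) (rho : X -> 'I_k)
  (Hs : forall i, exists x, rho x = i) (Hblock : forall i, R (Lset (fun x => rho x = i))) :
  forall d : Tel 'I_k, R (pullT rho Hs d).
Proof.
  assert (HP : forall P : 'I_k -> Prop, R (Lset (fun x => P (rho x)))).
  { intro P.
    assert (Hn : forall n, R (Lset (fun x => (rho x < n)%N /\ P (rho x)))).
    { induction n as [|n IH].
      - apply (R_Lext R (fun _ => False)); [intros x; split; [tauto|intros [H _]; discriminate H]|].
        apply R_Lconst; auto.
      - destruct (ltnP n k) as [Hnk|Hnk].
        + set (i := Ordinal Hnk).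
          apply (R_Lext R (fun x => ((rho x < n)%N /\ P (rho x)) \/ (rho x = i /\ P i))).
          * intros x. split.
            -- intros [[H1 H2]|[H1 H2]].
               ++ split; [rewrite ltnS; apply ltnW; exact H1|exact H2].
               ++ split; [rewrite H1; unfold i; simpl; apply leqnn|rewrite H1; exact H2].
            -- intros [H1 H2]. rewrite ltnS leq_eqVlt in H1. destruct (orP H1) as [H3|H3].
               ++ right. assert (E : rho x = i) by (apply val_inj; simpl; apply/eqP; exact H3).
                  split; [exact E|rewrite <- E; exact H2].
               ++ left; auto.
          * apply R_Ljoin; auto. apply R_Lmeet; auto. apply R_Lconst; auto.
        + apply (R_Lext R (fun x => (rho x < n)%N /\ P (rho x))); [|exact IH].
          intros x. split; intros [H1 H2].
          * split; [rewrite ltnS; apply ltnW; exact H1|exact H2].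
          * split; [apply (leq_trans (ltn_ord (rho x)) Hnk)|exact H2]. }
    apply (R_Lext R (fun x => (rho x < k)%N /\ P (rho x))); [|apply Hn].
    intros x; split; [tauto|]. intros H; split; auto. }
  intro d. destruct (classic (forall i, ~ tV d i)) as [H|H].
  - replace (pullT rho Hs d) with (Lset (fun x => tU d (rho x))); [apply HP|].
    apply Teq; simpl; intros; split; try tauto. apply H.
  - assert (HU : forall i, tU d i) by (destruct (tC d) as [A|A]; [exact A|contradiction]).
    replace (pullT rho Hs d) with (Tdm (Lset (fun x => ~ tV d (rho x)))).
    + destruct HR as (_ & _ & _ & _ & _ & Hd). apply Hd. exact (HP (fun i => ~ tV d i)).
    + apply Teq; simpl; intro z; split; intro Hq; try exact I; try apply HU; try (apply NNPP; exact Hq); try (intro Hn; exact (Hn Hq)). all: try (intro Hf; exact Hf).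
Qed.

Lemma fin_range {X} (k : nat) (rho : X -> 'I_k) (Hs : forall i, exists x, rho x = i) (y : Tel X)
  (Hinv : forall x x', rho x = rho x' -> (tU y x <-> tU y x') /\ (tV y x <-> tV y x')) :
  exists d, pullT rho Hs d = y.
Proof.
  unshelve eexists (mkT (fun i => exists x, rho x = i /\ tU y x) (fun i => exists x, rho x = i /\ tV y x) _).
  - destruct (tC y) as [A|A]; [left|right].
    + intros i. destruct (Hs i) as [x Hx]. exists x; auto.
    + intros i [x [_ Hx]]. exact (A x Hx).
  - apply Teq; simpl; intros z; split.
    + intros [x [E H]]. apply (proj1 (Hinv x z E)); exact H.
    + intros H; exists z; auto.
    + intros [x [E H]]. apply (proj2 (Hinv x z E)); exact H.
    + intros H; exists z; auto.
Qed.

Fixpoint allb (n : nat) : seq (seq bool) :=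
  match n with
  | 0 => [:: [::]]
  | S n => [seq true :: s | s <- allb n] ++ [seq false :: s | s <- allb n]
  end.

Lemma allb_mem n (s : seq bool) : size s = n -> s \in allb n.
Proof.
  revert s; induction n as [|n IH]; intros s Hs.
  - destruct s; [reflexivity|discriminate].
  - destruct s as [|b s]; [discriminate|]. simpl in Hs. injection Hs as Hs.
    simpl. rewrite mem_cat. apply/orP. destruct b; [left|right]; apply map_f; apply IH; exact Hs.
Qed.

Lemma size_Lmap {A B} (f : A -> B) (l : list A) : size (List.map f l) = size l.
Proof. induction l; simpl; auto. Qed.

Lemma Lmap_eq_in {A B} (f g : A -> B) (l : list A) a : List.map f l = List.map g l -> List.In a l -> f a = g a.
Proof.
  induction l as [|b l IH]; simpl; [tauto|]. intros E [H|H].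
  - subst. injection E; auto.
  - injection E; intros; auto.
Qed.

Lemma block_exists {X} (x0 : X) (R : Tel X -> Prop) (HR : closedR R) (Hc : R cT)
  (l : list (Tel X)) (Hl : forall y, List.In y l -> R y) :
  exists k (rho : X -> 'I_k) (Hs : forall i, exists x, rho x = i),
    (forall i, R (Lset (fun x => rho x = i))) /\
    (forall y, List.In y l -> forall x x', rho x = rho x' -> (tU y x <-> tU y x') /\ (tV y x <-> tV y x')).
Proof.
  set (Ss := List.flat_map (fun y => tU y :: (fun x => ~ tV y x) :: nil) l).
  set (sig := fun x => List.map (fun S => dec (S x)) Ss).
  set (Sig := undup [seq s <- allb (size Ss) | dec (exists x, sig x = s)]).
  assert (Hmem : forall x, sig x \in Sig).
  { intro x. unfold Sig. rewrite mem_undup mem_filter. apply/andP; split.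
    - apply decP. exists x; reflexivity.
    - apply allb_mem. unfold sig. apply size_Lmap. }
  assert (Huniq : uniq Sig) by apply undup_uniq.
  exists (size Sig).
  assert (Hlt : forall x, (index (sig x) Sig < size Sig)%N) by (intro x; rewrite index_mem; apply Hmem).
  exists (fun x => Ordinal (Hlt x)).
  assert (Hidx : forall x (i : 'I_(size Sig)), index (sig x) Sig = i <-> sig x = nth [::] Sig i).
  { intros x i. split.
    - intros E. rewrite <- E. symmetry. apply nth_index. apply Hmem.
    - intros E. rewrite E. apply index_uniq; auto. }
  unshelve eexists.
  - intros i. assert (Hi : nth [::] Sig i \in Sig) by (apply mem_nth; apply ltn_ord).
    unfold Sig in Hi. rewrite mem_undup mem_filter in Hi. destruct (andP Hi) as [H1 _].
    pose proof (proj1 (decP _) H1) as H1'. destruct H1' as [x Hx]. exists x. apply val_inj; simpl. apply Hidx. exact Hx.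
  - split.
    + intros i. apply (R_Lext R (fun x => sig x = nth [::] Sig i)).
      * intros x. split.
        -- intros E. apply val_inj; simpl. apply Hidx. exact E.
        -- intros E. apply (f_equal val) in E. simpl in E. apply Hidx. exact E.
      * unfold sig. apply R_sig; auto. intros S HS. unfold Ss in HS.
        apply List.in_flat_map in HS. destruct HS as [y [Hy HS]].
        destruct HR as (Hb & Ht & Hm & Hj & Hst & Hd).
        simpl in HS. destruct HS as [HS|[HS|[]]]; subst S.
        -- replace (Lset (tU y)) with (Tmeet y cT); [apply Hm; auto|]. apply Teq; simpl; tauto.
        -- replace (Lset (fun x => ~ tV y x)) with (Tmeet (Tdm y) cT); [apply Hm; auto|]. apply Teq; simpl; tauto.
    + intros y Hy x x' E. apply (f_equal val) in E. simpl in E.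
      assert (Es : sig x = sig x').
      { rewrite <- (nth_index [::] (Hmem x)), <- (nth_index [::] (Hmem x')), E. reflexivity. }
      assert (HS : forall S, List.In S Ss -> (S x <-> S x')).
      { intros S HS. pose proof (Lmap_eq_in _ _ _ S Es HS) as E2. simpl in E2.
        split; intro H; [apply decP; rewrite <- E2; apply decP; exact H|apply decP; rewrite E2; apply decP; exact H]. }
      split.
      * apply HS. unfold Ss. apply List.in_flat_map. exists y; split; auto. simpl; auto.
      * assert (H2 : (~ tV y x) <-> (~ tV y x')).
        { apply (HS (fun z => ~ tV y z)). unfold Ss. apply List.in_flat_map. exists y; split; auto. simpl; auto. }
        split; intro H; apply NNPP; intro Hn; [apply (proj2 H2 Hn)|apply (proj1 H2 Hn)]; exact H.
Qed.

Definition D (n : nat) : pcdm :=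
  match n with 0 => Tpcdm 'I_0 | 1 => Two | S (S k) => Tpcdm 'I_(S k) end.

Lemma D0_sat e : satisfies (D 0) e.
Proof. intros v. simpl. apply Teq; intros z; destruct z as [z Hz]; discriminate Hz. Qed.

Lemma emb m n : (0 < m)%N -> (m <= n)%N ->
  exists j : car (D m) -> car (D n), hom (D m) (D n) j /\ (forall x y, j x = j y -> x = y).
Proof.
  destruct m as [|[|a]]; destruct n as [|[|b]]; simpl; intros H1 H2; try discriminate.
  - exists (fun x => x). split; [|auto]. unfold hom; repeat split.
  - exists twoT. split; [apply twoT_hom|].
    intros x y E. destruct x, y; auto; exfalso; apply TeqU with (z := ord0) in E; simpl in E; tauto.
  - assert (Hab : (a <= b)%N) by exact H2.
    set (p := fun i : 'I_(S b) => @inord a (minn i a)).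
    assert (Hp : forall y, exists z, p z = y).
    { intros y. assert (Hy : (y < S b)%N) by (apply (leq_trans (ltn_ord y)); exact H2).
      exists (Ordinal Hy). unfold p; simpl. apply val_inj; simpl.
      rewrite inordK; [|rewrite ltnS; apply geq_minr].
      apply/minn_idPl. rewrite -ltnS. apply ltn_ord. }
    exists (pullT p Hp). split; [apply pullT_hom|]. apply pullT_inj.
Qed.

Lemma sub_sat m n e : (m <= n)%N -> satisfies (D n) e -> satisfies (D m) e.
Proof.
  intros Hmn Hs. destruct m as [|m]; [apply D0_sat|].
  destruct (emb (S m) n (ltn0Sn m) Hmn) as [j [Hj Hi]].
  exact (sat_inj _ _ j Hj Hi e Hs).
Qed.

Fixpoint bigM (f : nat -> term) (n : nat) : term :=
  match n with 0 => TOne | S n => TMeet (bigM f n) (f n) end.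
Fixpoint bigJ (f : nat -> term) (n : nat) : term :=
  match n with 0 => TZero | S n => TJoin (bigJ f n) (f n) end.

Definition Lee (m : nat) : term :=
  TJoin (TStar (bigM TVar m))
        (bigJ (fun i => TStar (bigM (fun j => if Nat.eqb j i then TStar (TVar j) else TVar j) m)) m).

Lemma evalM Z v f n z : tU (eval (Tpcdm Z) v (bigM f n)) z <-> (forall i, (i < n)%N -> tU (eval (Tpcdm Z) v (f i)) z).
Proof.
  induction n as [|n IH]; simpl.
  - split; auto. intros _ i Hi. discriminate Hi.
  - rewrite IH. split.
    + intros [H1 H2] i Hi. rewrite ltnS leq_eqVlt in Hi. destruct (orP Hi) as [E|E].
      * rewrite (eqP E). exact H2.
      * apply H1; exact E.
    + intros H; split; auto.
Qed.

Lemma evalJV Z v f n z : tV (eval (Tpcdm Z) v (bigJ f n)) z <-> (exists i, (i < n)%N /\ tV (eval (Tpcdm Z) v (f i)) z).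
Proof.
  induction n as [|n IH]; simpl.
  - split; [tauto|]. intros [i [Hi _]]; discriminate Hi.
  - rewrite IH. split.
    + intros [[i [Hi H]]|H]; [exists i; split; auto|exists n; split; auto].
    + intros [i [Hi H]]. rewrite ltnS leq_eqVlt in Hi. destruct (orP Hi) as [E|E].
      * right. rewrite (eqP E) in H. exact H.
      * left. exists i; auto.
Qed.
Lemma evalJU Z v f n z : tU (eval (Tpcdm Z) v (bigJ f n)) z <-> (exists i, (i < n)%N /\ tU (eval (Tpcdm Z) v (f i)) z).
Proof.
  induction n as [|n IH]; simpl.
  - split; [tauto|]. intros [i [Hi _]]; discriminate Hi.
  - rewrite IH. split.
    + intros [[i [Hi H]]|H]; [exists i; split; auto|exists n; split; auto].
    + intros [i [Hi H]]. rewrite ltnS leq_eqVlt in Hi. destruct (orP Hi) as [E|E].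
      * right. rewrite (eqP E) in H. exact H.
      * left. exists i; auto.
Qed.

Definition Wi {Z} (v : nat -> Tel Z) (m i : nat) (z : Z) : Prop :=
  forall j, (j < m)%N -> (if Nat.eqb j i then ~ tU (v j) z else tU (v j) z).

Lemma evalW Z v m i z : tU (eval (Tpcdm Z) v (bigM (fun j => if Nat.eqb j i then TStar (TVar j) else TVar j) m)) z <-> Wi v m i z.
Proof.
  rewrite evalM. unfold Wi. split; intros H j Hj; specialize (H j Hj); destruct (Nat.eqb j i); simpl in *; auto.
Qed.

Lemma Lee_V Z (v : nat -> Tel Z) m z :
  tV (eval (Tpcdm Z) v (Lee m)) z <->
  ((forall w, ~ (forall j, (j < m)%N -> tU (v j) w)) \/ exists i, (i < m)%N /\ forall w, ~ Wi v m i w).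
Proof.
  unfold Lee. simpl. rewrite evalJV. simpl.
  split; intros [H|[i [Hi H]]].
  - left. intros w Hw. apply (H w). apply evalM. exact Hw.
  - right. exists i; split; auto. intros w Hw. apply (H w). apply evalW; exact Hw.
  - left. intros w Hw. apply (H w). intros j Hj. exact (proj1 (evalM Z v TVar m w) Hw j Hj).
  - right. exists i; split; auto. intros w Hw. apply (H w). apply evalW; exact Hw.
Qed.

Lemma Lee_U Z (v : nat -> Tel Z) m z :
  tU (eval (Tpcdm Z) v (Lee m)) z <->
  ((~ (forall j, (j < m)%N -> tU (v j) z)) \/ exists i, (i < m)%N /\ ~ Wi v m i z).
Proof.
  unfold Lee. simpl. rewrite evalJU. simpl.
  split; intros [H|[i [Hi H]]].
  - left. intros Hw. apply H. apply evalM. exact Hw.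
  - right. exists i; split; auto. intros Hw. apply H. apply evalW; exact Hw.
  - left. intros Hw. apply H. intros j Hj. exact (proj1 (evalM Z v TVar m z) Hw j Hj).
  - right. exists i; split; auto. intros Hw. apply H. apply evalW; exact Hw.
Qed.

Lemma Lee_holds m (v : nat -> Tel 'I_m) : eval (Tpcdm 'I_m) v (Lee m) = Ttop.
Proof.
  assert (C : (forall w, ~ (forall j, (j < m)%N -> tU (v j) w)) \/
              exists i, (i < m)%N /\ forall w, ~ Wi v m i w).
  { apply NNPP; intro Hn. apply not_or_and in Hn. destruct Hn as [H1 H2].
    apply not_all_ex_not in H1. destruct H1 as [z0 Hz0]. apply NNPP in Hz0.
    assert (H3 : forall i, (i < m)%N -> exists w, Wi v m i w).
    { intros i Hi. apply NNPP; intro Hn. apply H2. exists i; split; auto.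
      intros w Hw. apply Hn; exists w; exact Hw. }
    assert (Hch : forall a : 'I_(S m), exists z : 'I_m,
               ((a < m)%N -> Wi v m a z) /\ (~ (a < m)%N -> forall j, (j < m)%N -> tU (v j) z)).
    { intros a. destruct (classic (a < m)%N) as [Ha|Ha].
      - destruct (H3 a Ha) as [w Hw]. exists w; split; auto. intros Hn; contradiction.
      - exists z0; split; auto. intros Hn; contradiction. }
    set (p := fun a => proj1_sig (constructive_indefinite_description _ (Hch a))).
    assert (Hp : forall a : 'I_(S m), ((a < m)%N -> Wi v m a (p a)) /\
                           (~ (a < m)%N -> forall j, (j < m)%N -> tU (v j) (p a)))
      by (intro a; unfold p; destruct (constructive_indefinite_description _ (Hch a)); simpl; auto).
    assert (Hinj : injective p).
    { intros a b E. apply val_inj. apply NNPP; intro Hab.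
      destruct (Hp a) as [Pa1 Pa2], (Hp b) as [Pb1 Pb2].
      destruct (classic (a < m)%N) as [Ha|Ha]; destruct (classic (b < m)%N) as [Hb|Hb].
      - specialize (Pa1 Ha a Ha). specialize (Pb1 Hb a Ha).
        rewrite Nat.eqb_refl in Pa1. assert (Nat.eqb a b = false) as F by (apply Nat.eqb_neq; exact Hab).
        rewrite F in Pb1. rewrite E in Pa1. exact (Pa1 Pb1).
      - specialize (Pa1 Ha a Ha). rewrite Nat.eqb_refl in Pa1. rewrite E in Pa1. exact (Pa1 (Pb2 Hb a Ha)).
      - specialize (Pb1 Hb b Hb). rewrite Nat.eqb_refl in Pb1. rewrite <- E in Pb1. exact (Pb1 (Pa2 Ha b Hb)).
      - apply Hab. assert (HA := ltn_ord a). assert (HB := ltn_ord b).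
        rewrite ltnS leq_eqVlt in HA. rewrite ltnS leq_eqVlt in HB.
        destruct (orP HA) as [EA|EA]; [|contradiction]. destruct (orP HB) as [EB|EB]; [|contradiction].
        transitivity m; [exact (eqP EA)|symmetry; exact (eqP EB)]. }
    pose proof (leq_card p Hinj) as L. rewrite !card_ord in L. rewrite ltnn in L. discriminate L. }
  apply Teq; intros z; simpl Ttop; split; intros _; try exact I.
  - apply Lee_U. destruct C as [C|[i [Hi C]]]; [left; apply C|right; exists i; split; auto].
  - apply Lee_V. exact C.
Qed.

Lemma Lee_fails m : exists v : nat -> Tel 'I_(S m), eval (Tpcdm 'I_(S m)) v (Lee m) <> Ttop.
Proof.
  exists (fun j => Lset (fun z : 'I_(S m) => nat_of_ord z <> j)).
  intro E. apply TeqV with (z := ord0) in E. simpl in E. pose proof (proj2 E I) as HI.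
  apply Lee_V in HI. simpl in HI. destruct HI as [H|[i [Hi H]]].
  - apply (H ord_max). intros j Hj. simpl. intro E2. rewrite E2 ltnn in Hj. discriminate.
  - apply (H (inord i)). intros j Hj. simpl. rewrite inordK; [|apply (ltn_trans Hi); apply ltnSn].
    destruct (Nat.eqb j i) eqn:Eji.
    + apply Nat.eqb_eq in Eji. subst. tauto.
    + apply Nat.eqb_neq in Eji. intro E3; apply Eji; symmetry; exact E3.
Qed.

Definition eid (n : nat) : identity :=
  match n with
  | 0 => (TVar 0, TVar 1)
  | 1 => (TJoin (TVar 0) (TStar (TVar 0)), TOne)
  | S (S k) => (Lee (S k), TOne)
  end.

Lemma eid_holds n : satisfies (D n) (eid n).
Proof.
  destruct n as [|[|k]].
  - apply D0_sat.
  - intros v. simpl. destruct (v 0); reflexivity.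
  - intros v. simpl (fst _). simpl (snd _). apply Lee_holds.
Qed.

Lemma eid_fails n : ~ satisfies (D (S n)) (eid n).
Proof.
  destruct n as [|[|k]]; intros H.
  - specialize (H (fun i => Nat.eqb i 0)). simpl in H. discriminate H.
  - specialize (H (fun _ => cT)). simpl in H. apply TeqV with (z := ord0) in H. simpl in H.
    pose proof (proj2 H I) as HI. destruct HI as [F|F]; [exact F|exact (F ord0 I)].
  - destruct (Lee_fails (S k)) as [v Hv]. apply Hv. exact (H v).
Qed.

Lemma strict n m : (n < m)%N -> ~ satisfies (D m) (eid n).
Proof. intros Hnm H. apply (eid_fails n). exact (sub_sat (S n) m _ Hnm H). Qed.

Lemma D_K1 n : inK1 (D n).
Proof. destruct n as [|[|k]]; simpl; [apply T_K1|apply Two_K1|apply T_K1]. Qed.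

Lemma fin_embed {X} (x0 : X) (R : Tel X -> Prop) (HR : closedR R)
  (l : list (Tel X)) (Hl : forall y, List.In y l -> R y) :
  exists n, exists j : car (D n) -> Tel X, hom (D n) (Tpcdm X) j /\ (forall a b, j a = j b -> a = b) /\
    (forall d, R (j d)) /\ (forall y, List.In y l -> exists d, j d = y).
Proof.
  destruct (classic (R cT)) as [Hc|Hc].
  - destruct (block_exists x0 R HR Hc l Hl) as [k [rho [Hs [Hb Hinv]]]].
    destruct k as [|k]; [destruct (rho x0) as [z Hz]; discriminate Hz|].
    exists (S (S k)), (pullT rho Hs). simpl. split; [apply pullT_hom|split; [apply pullT_inj|split]].
    + apply fin_core; auto.
    + intros y Hy. apply fin_range. apply Hinv; auto.
  - exists 1, twoT. simpl. split; [apply twoT_hom|split; [|split]].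
    + intros a b E. destruct a, b; auto; exfalso; apply TeqU with (z := x0) in E; simpl in E; tauto.
    + destruct HR as (Hb & Ht & _). intros []; simpl; auto.
    + intros y Hy. destruct (noc_bt R HR Hc y (Hl y Hy)) as [E|E]; [exists false|exists true]; auto.
Qed.

Fixpoint vb (t : term) : nat :=
  match t with
  | TVar n => S n
  | TMeet a b | TJoin a b => maxn (vb a) (vb b)
  | TStar a | TDm a => vb a
  | _ => 0
  end.

Lemma eval_ext (A : pcdm) v w t : (forall i, (i < vb t)%N -> v i = w i) -> eval A v t = eval A w t.
Proof.
  induction t; simpl; intros H; try reflexivity.
  - apply H. apply ltnSn.
  - rewrite IHt1 ?IHt2; auto; intros i Hi; apply H; rewrite leq_max Hi ?orbT //.
  - rewrite IHt1 ?IHt2; auto; intros i Hi; apply H; rewrite leq_max Hi ?orbT //.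
  - rewrite IHt; auto.
  - rewrite IHt; auto.
Qed.

Lemma KEY (A : pcdm) (HK : inK1 A) e : ~ satisfies A e ->
  exists n, ~ satisfies (D n) e /\ (forall e', satisfies A e' -> satisfies (D n) e').
Proof.
  intros Hn. unfold satisfies in Hn. apply not_all_ex_not in Hn. destruct Hn as [v Hv].
  destruct (sep A HK _ _ Hv) as [Z [h [Hh Hne]]].
  assert (x0 : exists z : Z, True).
  { apply NNPP; intro E. apply Hne. apply Teq; intros z; exfalso; apply E; exists z; exact I. }
  destruct x0 as [x0 _].
  set (R := fun y : Tel Z => exists a, h a = y).
  assert (HR : closedR R).
  { destruct Hh as (Hm & Hj & Hs & Hd & Hb & Ht).
    unfold closedR, R. split; [exists (bot A); exact Hb|split; [exists (top A); exact Ht|]].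
    split; [intros _ _ [a <-] [b <-]; exists (meet A a b); apply Hm|].
    split; [intros _ _ [a <-] [b <-]; exists (join A a b); apply Hj|].
    split; [intros _ [a <-]; exists (star A a); apply Hs|].
    intros _ [a <-]; exists (dm A a); apply Hd. }
  set (N := maxn (vb (fst e)) (vb (snd e))).
  set (l := List.map (fun i => h (v i)) (List.seq 0 N)).
  assert (Hl : forall y, List.In y l -> R y).
  { intros y Hy. unfold l in Hy. apply List.in_map_iff in Hy. destruct Hy as [i [<- _]]. exists (v i); reflexivity. }
  destruct (fin_embed x0 R HR l Hl) as [n [j [Hj [Hji [HjR Hjl]]]]].
  exists n. split.
  - assert (Hw : forall i, exists d, (i < N)%N -> j d = h (v i)).
    { intros i. destruct (classic (i < N)%N) as [Hi|Hi].
      - destruct (Hjl (h (v i))) as [d Hd].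
        + unfold l. apply List.in_map_iff. exists i; split; auto. apply List.in_seq. split; [apply Nat.le_0_l|].
          simpl. apply/ltP. exact Hi.
        + exists d; auto.
      - exists (bot (D n)); intro; contradiction. }
    set (w := fun i => proj1_sig (constructive_indefinite_description _ (Hw i))).
    assert (Hw' : forall i, (i < N)%N -> j (w i) = h (v i))
      by (intros i; unfold w; destruct (constructive_indefinite_description _ (Hw i)); simpl; auto).
    intros Hs. specialize (Hs w). apply Hne. apply (f_equal j) in Hs.
    rewrite (eval_hom (D n) (Tpcdm Z) j Hj w (fst e)) (eval_hom (D n) (Tpcdm Z) j Hj w (snd e)) in Hs.
    rewrite (eval_ext (Tpcdm Z) (fun i => j (w i)) (fun i => h (v i)) (fst e)) in Hs.
    2: { intros i Hi. apply Hw'. unfold N. rewrite leq_max Hi //. }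
    rewrite (eval_ext (Tpcdm Z) (fun i => j (w i)) (fun i => h (v i)) (snd e)) in Hs.
    2: { intros i Hi. apply Hw'. unfold N. rewrite leq_max Hi orbT //. }
    rewrite <- (eval_hom A (Tpcdm Z) h Hh v (fst e)), <- (eval_hom A (Tpcdm Z) h Hh v (snd e)) in Hs. exact Hs.
  - intros e' He' w'.
    assert (Hv' : forall i, exists a, h a = j (w' i)) by (intro i; apply HjR).
    set (v' := fun i => proj1_sig (constructive_indefinite_description _ (Hv' i))).
    assert (Hv'' : forall i, h (v' i) = j (w' i))
      by (intros i; unfold v'; destruct (constructive_indefinite_description _ (Hv' i)); simpl; auto).
    apply Hji. rewrite (eval_hom (D n) (Tpcdm Z) j Hj w' (fst e')) (eval_hom (D n) (Tpcdm Z) j Hj w' (snd e')).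
    assert (E : (fun i => j (w' i)) = (fun i => h (v' i))) by (extensionality i; auto).
    rewrite E. rewrite <- (eval_hom A (Tpcdm Z) h Hh v' (fst e')), <- (eval_hom A (Tpcdm Z) h Hh v' (snd e')). f_equal. apply He'.
Qed.

Lemma least (P : nat -> Prop) n : P n -> exists m, P m /\ forall k, (k < m)%N -> ~ P k.
Proof.
  revert n. induction n as [n IH] using ltn_ind. intros Hn.
  destruct (classic (exists k, (k < n)%N /\ P k)) as [[k [Hk Pk]]|H].
  - exact (IH k Hk Pk).
  - exists n; split; auto. intros k Hk Pk. apply H; exists k; auto.
Qed.

Theorem theorem5p3 :
  exists F : option nat -> (identity -> Prop),
    (forall i j : option nat,
        le_omega1 i j <-> (forall A : pcdm, ModK1 (F i) A -> ModK1 (F j) A)) /\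
    (forall V : pcdm -> Prop, subvariety_K1 V ->
        exists i : option nat, forall A : pcdm, V A <-> ModK1 (F i) A).
Proof.
  exists (fun i => match i with None => fun _ => False | Some n => fun e => satisfies (D n) e end).
  split.
  - intros [m|] [n|]; simpl; unfold ModK1.
    + split.
      * intros H A [HK HA]. split; auto. intros e He. apply HA. apply (sub_sat m n); auto. apply/leP; exact H.
      * intros H. apply NNPP; intro Hn. assert (Hnm : (n < m)%N) by (rewrite ltnNge; apply/negP; intro L; apply Hn; apply/leP; exact L).
        destruct (H (D m)) as [_ H2]; [split; [apply D_K1|auto]|].
        apply (strict n m Hnm). apply H2. apply eid_holds.
    + split; [intros _ A [HK _]; split; auto; intros e []|auto].
    + split; [intros []|]. intros H. destruct (H (D (S n))) as [_ H2]; [split; [apply D_K1|intros e []]|].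
      apply (eid_fails n). apply H2. apply eid_holds.
    + split; auto.
  - intros V [S HV].
    destruct (classic (exists m e, S e /\ ~ satisfies (D m) e)) as [[m0 Hm0]|Hno].
    + destruct (least (fun m => exists e, S e /\ ~ satisfies (D m) e) m0 Hm0) as [m [Pm Hmin]].
      destruct m as [|p]; [destruct Pm as [e [_ He]]; exfalso; apply He, D0_sat|].
      exists (Some p). intros A. rewrite HV. unfold ModK1. split.
      * intros [HK HS]. split; auto. intros e He. apply NNPP; intro Hn.
        destruct (KEY A HK e Hn) as [n [Hn1 Htr]].
        assert (Hpn : (p < n)%N).
        { rewrite ltnNge; apply/negP; intro L. apply Hn1. exact (sub_sat n p e L He). }
        destruct Pm as [e0 [HSe0 He0]]. apply He0. apply (sub_sat p.+1 n e0); [exact Hpn|apply Htr, HS, HSe0].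
      * intros [HK HT]. split; auto. intros e He. apply NNPP; intro Hn.
        destruct (KEY A HK e Hn) as [n [Hn1 Htr]].
        assert (Hpn : (p < n)%N).
        { rewrite ltnNge; apply/negP; intro L. apply (Hmin n); [rewrite ltnS; exact L|]. exists e; auto. }
        apply (strict p n Hpn). apply Htr. apply HT. apply eid_holds.
    + exists None. intros A. rewrite HV. unfold ModK1. split.
      * intros [HK _]. split; auto. intros e [].
      * intros [HK _]. split; auto. intros e He. apply NNPP; intro Hn.
        destruct (KEY A HK e Hn) as [n [Hn1 _]]. apply Hno. exists n, e; auto.
Qed.
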